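(* Let $\mathbb{K}$ be a perfect field, $\mathbf{u}_1,\dots,\mathbf{u}_t\in\mathbb{K}^{\mathbb{N}^n}$ with $\mathrm{ann}(\mathbf{u}_1,\dots,\mathbf{u}_t)$ zero-dimensional, and fix $j\in\{1,\dots,n\}$. Suppose $b_1<\cdots<b_u<b_{u+1}$ are the first $u+1$ standard monomials of $\mathbb{K}[X_j,\dots,X_n]/J_j$ for the lexicographic order induced by $X_j>\cdots>X_n$, with $b_1=1$. Then for any monomial $b$ with $b_u<b<b_{u+1}$, the family $\{b_1,\dots,b_u,b\}$ is dependent.
   Context: For $m\in\mathbb{N}^n$, $\mathbf{X}^m=X_1^{m_1}\cdots X_n^{m_n}$; for a sequence $\mathbf{u}=(u_m)_m$ and $f=\sum_m f_m\mathbf{X}^m$, $\langle\mathbf{u}\mid f\rangle=\sum_mf_mu_m$, $f\cdot\mathbf{u}=(\langle\mathbf{u}\mid\mathbf{X}^mf\rangle)_m$, $\mathrm{ann}(\mathbf{u})$ is the ideal of $f$ with $f\cdot\mathbf{u}=0$, and $\mathrm{ann}$ of several sequences is the intersection. $\pi_j(\mathbf{u}_i)$ is the sequence indexed by $\mathbb{N}^{n-j+1}$ with $\langle\pi_j(\mathbf{u}_i)\mid(m_j,\dots,m_n)\rangle=\langle\mathbf{u}_i\mid(0,\dots,0,m_j,\dots,m_n)\rangle$, and $J_j=\mathrm{ann}(\pi_j(\mathbf{u}_1),\dots,\pi_j(\mathbf{u}_t))\subset\mathbb{K}[X_j,\dots,X_n]$. A family of monomials in $\mathbb{K}[X_j,\dots,X_n]$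 is dependent if its images modulo $J_j$ are $\mathbb{K}$-linearly dependent. *)

(* Defs.v *)
From HB Require Import structures.
From mathcomp Require Import all_boot all_order all_algebra.
From mathcomp Require Import mpoly.
Set Implicit Arguments. Unset Strict Implicit. Unset Printing Implicit Defensive.
Import GRing.Theory.
Local Open Scope ring_scope.

Definition perfect_field (K : fieldType) : Prop :=
  forall p : nat, p \in [pchar K] -> forall x : K, exists y : K, y ^+ p = x.

Section Seqs.
Variables (K : fieldType) (k : nat).

Definition mseq := 'X_{1..k} -> K.

Definition pairing (u : mseq) (f : {mpoly K[k]}) : K :=
  \sum_(m <- msupp f) f@_m * u m.

Definition shift (f : {mpoly K[k]}) (u : mseq) : mseq :=
  fun m => pairing u ('X_[m] * f).

Definition in_ann (t : nat) (us : 'I_t -> mseq) (f : {mpoly K[k]}) : Prop :=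
  forall i : 'I_t, forall m : 'X_{1..k}, shift f (us i) m = 0.

(* The ideal I (given as a predicate) is zero-dimensional: K[X]/I is a
   finite dimensional K-vector space, i.e. spanned by the classes of
   finitely many polynomials. *)
Definition zero_dim (I : {mpoly K[k]} -> Prop) : Prop :=
  exists s : seq {mpoly K[k]}, forall f : {mpoly K[k]},
    exists c : 'I_(size s) -> K, I (f - \sum_(i < size s) c i *: s`_i).

(* Lexicographic order with X_1 > X_2 > ... > X_k (index 0 is the largest
   variable): m1 <lex m2. *)
Definition lex_lt (m1 m2 : 'X_{1..k}) : Prop :=
  exists i : 'I_k, (forall l : 'I_k, (l < i)%N -> m1 l = m2 l) /\ (m1 i < m2 i)%N.

Definition lex_lead (f : {mpoly K[k]}) (m : 'X_{1..k}) : Prop :=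
  m \in msupp f /\ forall m', m' \in msupp f -> m' <> m -> lex_lt m' m.

Definition lex_standard (I : {mpoly K[k]} -> Prop) (m : 'X_{1..k}) : Prop :=
  ~ exists f : {mpoly K[k]}, [/\ I f, f != 0 & lex_lead f m].

Definition dependent (I : {mpoly K[k]} -> Prop) (bs : seq 'X_{1..k}) : Prop :=
  exists c : 'I_(size bs) -> K,
    (exists i, c i != 0) /\ I (\sum_(i < size bs) c i *: 'X_[nth 0%MM bs i]).

End Seqs.

(* pi_j(u): for j0 = j - 1 (0-based), the sequence on N^(n-j0) given by
   m' |-> u (0,...,0,m') (j0 leading zeros). *)
Definition proj (K : fieldType) (n : nat) (j0 : 'I_n) (u : mseq K n)
  : mseq K (n - j0) :=
  fun m' => u [multinom (if (j0 <= i)%N then nth 0%N m' (i - j0) else 0%N) | i < n].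
Arguments proj {K n} j0 u _.

(* Main.v *)
Require Import Defs.
From HB Require Import structures.
From mathcomp Require Import all_boot all_order all_algebra.
From mathcomp Require Import mpoly.
From Stdlib Require Import Classical.
Import GRing.Theory.
Set Implicit Arguments.
Local Open Scope ring_scope.


Section Lex.
Variable k : nat.
Implicit Types m : 'X_{1..k}.

Lemma lex_irr m : ~ lex_lt m m.
Proof. by case=> i [_]; rewrite ltnn. Qed.

Lemma lex_trans m1 m2 m3 : lex_lt m1 m2 -> lex_lt m2 m3 -> lex_lt m1 m3.
Proof.
case=> i [H1 L1] [j [H2 L2]].
case: (ltngtP i j) => Hij.
- exists i; split; last by rewrite -(H2 i Hij).
  by move=> l Hl; rewrite H1 // H2 // (ltn_trans Hl Hij).
- exists j; split; last by rewrite (H1 j Hij).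
  by move=> l Hl; rewrite H1 ?H2 // (ltn_trans Hl Hij).
- have eij : i = j by apply: val_inj.
  subst j; exists i; split; last exact: ltn_trans L1 L2.
  by move=> l Hl; rewrite H1 ?H2.
Qed.

Definition Li (i : nat) m1 m2 :=
  (forall l : 'I_k, (l < i)%N -> m1 l = m2 l) /\ lex_lt m1 m2.

Lemma Li_acc d : forall i, (i + d = k)%N -> forall m, Acc (Li i) m.
Proof.
elim: d => [|d IH] i Hid m.
  constructor=> m1 [Ha [j [_ Hj]]].
  have := ltn_ord j; rewrite -{2}Hid addn0 => Hj'.
  by exfalso; move: Hj; rewrite Ha ?ltnn.
have ik : (i < k)%N by rewrite -Hid addnS ltnS leq_addr.
pose io := Ordinal ik.
have IH' : forall m, Acc (Li i.+1) m by apply: IH; rewrite addSnnS.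
move: {2}(m io) (erefl (m io)) => v.
elim/ltn_ind: v m => v IHv m Hm.
elim: (IH' m) Hm => {}m _ IHacc Hm.
constructor=> m1 [Ha [j [Hj Hlt]]].
case: (ltngtP j i) => Hji.
- by exfalso; move: Hlt; rewrite Ha ?ltnn.
- apply: IHacc.
    split; last by exists j.
    move=> l; rewrite ltnS leq_eqVlt => /orP [/eqP li|]; last exact: Ha.
    by apply: Hj; rewrite li.
  by rewrite -Hm; apply: (Hj io).
- have eji : j = io by apply: val_inj.
  subst j; apply: (IHv (m1 io)); last by [].
  by rewrite -Hm.
Qed.

Lemma lex_wf m : Acc (@lex_lt k) m.
Proof.
have := @Li_acc k 0 (erefl _) m.
elim=> {}m _ IH; constructor=> m1 H; apply: IH; split=> //.
Qed.
End Lex.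

Section Pair.
Variables (K : fieldType) (k : nat).

Lemma pairingE (v : mseq K k) f (w : seq 'X_{1..k}) : uniq w ->
  {subset msupp f <= w} -> pairing v f = \sum_(m <- w) f@_m * v m.
Proof.
move=> uw sub; rewrite /pairing [RHS](bigID (fun m => m \in msupp f)) /=.
rewrite [X in _ + X]big1 ?addr0; last first.
  by move=> m; rewrite -mcoeff_eq0 => /eqP ->; rewrite mul0r.
rewrite -[RHS]big_filter; apply: perm_big; apply: uniq_perm.
- exact: msupp_uniq.
- by rewrite filter_uniq.
- by move=> m; rewrite mem_filter; case: (boolP (m \in msupp f)) => // /sub ->.
Qed.

Lemma pairing_lin (v : mseq K k) a f g :
  pairing v (a *: f + g) = a * pairing v f + pairing v g.
Proof.
set w := undup (msupp f ++ msupp g).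
have uw : uniq w by exact: undup_uniq.
have sf : {subset msupp f <= w} by move=> m Hm; rewrite mem_undup mem_cat Hm.
have sg : {subset msupp g <= w} by move=> m Hm; rewrite mem_undup mem_cat Hm orbT.
have sfg : {subset msupp (a *: f + g) <= w}.
  move=> m /msuppD_le; rewrite mem_cat => /orP [/msuppZ_le|]; [exact: sf|exact: sg].
rewrite (@pairingE v _ _ uw sf) (@pairingE v _ _ uw sg) (@pairingE v _ _ uw sfg) mulr_sumr -big_split /=.
by apply: eq_bigr => m _; rewrite mcoeffD mcoeffZ mulrDl mulrA.
Qed.

Lemma pairing0 (v : mseq K k) : pairing v 0 = 0.
Proof.
have := pairing_lin v 1 0 0; rewrite scale1r addr0 mul1r => H.
by apply: (addrI (pairing v 0)); rewrite addr0 -H.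
Qed.

Lemma in_ann0 t (us : 'I_t -> mseq K k) : in_ann us 0.
Proof. by move=> i m; rewrite /shift mulr0 pairing0. Qed.

Lemma in_ann_lin t (us : 'I_t -> mseq K k) a f g :
  in_ann us f -> in_ann us g -> in_ann us (a *: f + g).
Proof.
move=> Hf Hg i m; rewrite /shift mulrDr -scalerAr pairing_lin.
by have := Hf i m; have := Hg i m; rewrite /shift => -> ->; rewrite mulr0 addr0.
Qed.
End Pair.

Section Red.
Variables (K : fieldType) (k : nat) (I : {mpoly K[k]} -> Prop).
Hypothesis HI0 : I 0.
Hypothesis HIlin : forall a f g, I f -> I g -> I (a *: f + g).
Variables (u : nat) (bs : seq 'X_{1..k}).
Hypothesis Hsize : size bs = u.+1.
Hypothesis Hfirst : forall m, lex_standard I m -> lex_lt m (nth 0%MM bs u) -> m \in bs.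

Definition spn (g : {mpoly K[k]}) :=
  exists c : nat -> K, I (g - \sum_(i < u) c i *: 'X_[nth 0%MM bs i]).

Lemma spn_lin a f g : spn f -> spn g -> spn (a *: f + g).
Proof.
move=> [cf Hf] [cg Hg]; exists (fun i => a * cf i + cg i).
have -> : a *: f + g - \sum_(i < u) (a * cf i + cg i) *: 'X_[nth 0%MM bs i] =
  a *: (f - \sum_(i < u) cf i *: 'X_[nth 0%MM bs i]) +
  (g - \sum_(i < u) cg i *: 'X_[nth 0%MM bs i]).
  rewrite scalerBr scaler_sumr.
  under [X in _ = _ + (_ - X)]eq_bigr do rewrite -[cg _ *: _]scale1r.
  rewrite (_ : \sum_(i < u) (a * cf i + cg i) *: 'X_[nth 0%MM bs i] =
     \sum_(i < u) a *: (cf i *: 'X_[nth 0%MM bs i]) +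
     \sum_(i < u) cg i *: 'X_[nth 0%MM bs i]); last first.
    by rewrite -big_split /=; apply: eq_bigr => i _; rewrite scalerA scalerDl.
  under [X in _ = _ + (_ - X)]eq_bigr do rewrite scale1r.
  rewrite opprD !addrA; congr (_ - _); rewrite -!addrA; congr (_ + _).
  by rewrite addrC.
exact: HIlin.
Qed.

Lemma spn0 : spn 0.
Proof.
exists (fun _ => 0); rewrite big1 ?subr0 // => i _; by rewrite scale0r.
Qed.

Lemma spnI f : I f -> spn f.
Proof. by move=> Hf; exists (fun _ => 0); rewrite big1 ?subr0 // => i _; rewrite scale0r. Qed.

Lemma spn_sum (s : seq 'X_{1..k}) (P : pred 'X_{1..k}) (F : 'X_{1..k} -> K) :
  (forall m, m \in s -> P m -> spn 'X_[m]) ->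
  spn (\sum_(m <- s | P m) F m *: 'X_[m]).
Proof.
elim: s => [|x s IH] H; first by rewrite big_nil; exact: spn0.
rewrite big_cons; case: ifP => Px.
  apply: spn_lin; first by apply: H; rewrite ?mem_head.
  by apply: IH => m Hm; apply: H; rewrite inE Hm orbT.
by apply: IH => m Hm; apply: H; rewrite inE Hm orbT.
Qed.

Lemma spn_mon m : lex_lt m (nth 0%MM bs u) -> spn 'X_[m].
Proof.
elim: (lex_wf m) => {}m _ IH Hm.
case: (classic (lex_standard I m)) => Hst.
  have mbs := Hfirst Hst Hm.
  set i := index m bs.
  have ib : (i < u.+1)%N by rewrite -Hsize index_mem.
  have ei : nth 0%MM bs i = m by apply: nth_index.
  have iu : (i < u)%N.
    rewrite ltn_neqAle -ltnS ib andbT; apply/eqP => E.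
    by apply: (@lex_irr _ m); rewrite -{2}ei E.
  exists (fun j => (j == i)%:R).
  rewrite (bigD1 (Ordinal iu)) //= eqxx scale1r ei big1 ?addr0 ?subrr //.
  by move=> j /negbTE Hj; rewrite -val_eqE /= in Hj; rewrite Hj scale0r.
have [f [If fn0 [mf Hlt]]] : exists f, [/\ I f, f != 0 & lex_lead f m].
  by apply: NNPP.
set c := f@_m.
have cn0 : c != 0 by rewrite /c -mcoeff_msupp.
have -> : 'X_[m] = c^-1 *: f + (- c^-1) *:
    \sum_(m' <- msupp f | m' != m) f@_m' *: 'X_[m'].
  rewrite {1}(mpolyE f) (bigD1_seq m) //= -/c.
  rewrite scalerDr scalerA mulVf // scale1r scaleNr addrK //.
apply: spn_lin; first exact: spnI.
rewrite -[X in spn X]addr0; apply: spn_lin; last exact: spn0.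
apply: spn_sum => m' Hm' Hne.
have lt' : lex_lt m' m by apply: Hlt => // E; rewrite E eqxx in Hne.
apply: IH => //; exact: lex_trans lt' Hm.
Qed.
End Red.

Lemma dep_final (K : fieldType) (k : nat) (I : {mpoly K[k]} -> Prop) (u : nat)
  (bs : seq 'X_{1..k}) (b : 'X_{1..k}) (c : nat -> K) :
  size bs = u.+1 ->
  I ('X_[b] - \sum_(i < u) c i *: 'X_[nth 0%MM bs i]) ->
  dependent I (rcons (take u bs) b).
Proof.
move=> Hsize Hc.
have sz : size (rcons (take u bs) b) = u.+1.
  by rewrite size_rcons size_take Hsize ltnSn.
have hu : (u < size (rcons (take u bs) b))%N by rewrite sz.
exists (fun i : 'I_(size (rcons (take u bs) b)) => if (i < u)%N then - c i else 1).
split; first by exists (Ordinal hu); rewrite /= ltnn oner_neq0.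
rewrite -(big_mkord xpredT (fun i => (if (i < u)%N then - c i else 1) *:
   'X_[nth 0%MM (rcons (take u bs) b) i])) sz big_nat_recr //= ltnn scale1r.
rewrite nth_rcons size_take Hsize ltnSn ltnn eqxx addrC big_mkord.
rewrite (eq_bigr (fun i : 'I_u => - (c i *: 'X_[nth 0%MM bs i]))); last first.
  by move=> i _; rewrite ltn_ord nth_rcons size_take Hsize ltnSn ltn_ord nth_take // scaleNr.
by rewrite sumrN.
Qed.

Theorem lemma5 (K : fieldType) (HK : perfect_field K) (n t : nat)
  (us : 'I_t -> mseq K n) (H0 : zero_dim (in_ann us))
  (j0 : 'I_n) (u : nat) (Hu : (0 < u)%N) (bs : seq 'X_{1..n - j0})
  (Hsize : size bs = u.+1)
  (Hb1 : nth 0%MM bs 0 = 0%MM)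
  (Hsorted : forall i l : nat, (i < l <= u)%N -> lex_lt (nth 0%MM bs i) (nth 0%MM bs l))
  (Hstd : forall i : nat, (i <= u)%N ->
     lex_standard (in_ann (fun r => proj j0 (us r))) (nth 0%MM bs i))
  (Hfirst : forall m : 'X_{1..n - j0},
     lex_standard (in_ann (fun r => proj j0 (us r))) m ->
     lex_lt m (nth 0%MM bs u) -> m \in bs)
  (b : 'X_{1..n - j0})
  (Hlo : lex_lt (nth 0%MM bs u.-1) b) (Hhi : lex_lt b (nth 0%MM bs u)) :
  dependent (in_ann (fun r => proj j0 (us r))) (rcons (take u bs) b).
Proof.
have HI0 := in_ann0 (fun r => proj j0 (us r)).
have HIlin := @in_ann_lin _ _ _ (fun r => proj j0 (us r)).
have [c Hc] := @spn_mon _ _ _ HI0 HIlin u bs Hsize Hfirst b Hhi.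
exact: (@dep_final K (n - j0) (in_ann (fun r => proj j0 (us r))) u bs b c Hsize Hc).
Qed.
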